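(* Let $R$ be a commutative coherent ring and $0\to A\to B\to C\to 0$ an exact sequence of $R$-modules with $A$ absolutely $w$-pure. Then $B$ is absolutely $w$-pure if and only if $C$ is absolutely $w$-pure.
   Context: A ring is coherent if every finitely generated ideal is finitely presented. A $GV$-ideal of $R$ is a finitely generated ideal $J$ such that the natural map $R\to\mathrm{Hom}_R(J,R)$ is an isomorphism; $GV(R)$ is the set of $GV$-ideals. An $R$-module $X$ is $GV$-torsion if every $x\in X$ satisfies $Jx=0$ for some $J\in GV(R)$. An $R$-module $A$ is absolutely $w$-pure if $\mathrm{Ext}^1_R(N,A)$ is $GV$-torsion for every finitely presented $R$-module $N$. *)

(* Defs.v *)
From HB Require Import structures.
From mathcomp Require Import all_boot all_order all_algebra.
Set Implicit Arguments. Unset Strict Implicit. Unset Printing Implicit Defensive.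
Import GRing.Theory.
Local Open Scope ring_scope.

Definition in_ideal_gen (R : comNzRingType) (m : nat) (a : 'I_m -> R) (j : R) : Prop :=
  exists x : 'I_m -> R, j = \sum_(i < m) x i * a i.

Definition syzygy (R : comNzRingType) (m : nat) (a : 'I_m -> R) (x : 'I_m -> R) : Prop :=
  \sum_(i < m) x i * a i = 0.

(* A finitely generated ideal I (given by generators a) is finitely presented:
   there is a finite generating family a' of the same ideal such that the kernel of
   R^m' -> I is finitely generated, i.e. there is an exact sequence R^k -> R^m' -> I -> 0. *)
Definition fp_ideal (R : comNzRingType) (m : nat) (a : 'I_m -> R) : Prop :=
  exists (m' : nat) (a' : 'I_m' -> R),
    (forall j, in_ideal_gen a j <-> in_ideal_gen a' j) /\
    exists (k : nat) (s : 'I_k -> ('I_m' -> R)),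
      forall x : 'I_m' -> R,
        syzygy a' x <-> exists y : 'I_k -> R, forall i, x i = \sum_(l < k) y l * s l i.

Definition coherent (R : comNzRingType) : Prop :=
  forall (m : nat) (a : 'I_m -> R), fp_ideal a.

(* GV-ideals: J finitely generated (by a) such that the natural map
   R -> Hom_R(J, R), r |-> (j |-> r j), is an isomorphism.
   Elements of Hom_R(J,R) are represented by functions R -> R that are R-linear on J
   (only their values on J matter). *)
Definition linear_on_ideal (R : comNzRingType) (m : nat) (a : 'I_m -> R) (phi : R -> R) : Prop :=
  forall (c j1 j2 : R), in_ideal_gen a j1 -> in_ideal_gen a j2 ->
    phi (c * j1 + j2) = c * phi j1 + phi j2.

Definition GV_ideal (R : comNzRingType) (m : nat) (a : 'I_m -> R) : Prop :=
  (forall r : R, (forall j, in_ideal_gen a j -> r * j = 0) -> r = 0) /\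
  (forall phi : R -> R, linear_on_ideal a phi ->
     exists r : R, forall j, in_ideal_gen a j -> phi j = r * j).

(* A finitely presented module is N = R^n / K with K the (finitely generated)
   submodule of R^n = 'rV_n spanned by the rows of M : 'M_(m, n). *)
Definition in_rowspan (R : comNzRingType) (m n : nat) (M : 'M[R]_(m, n)) (u : 'rV[R]_n) : Prop :=
  exists x : 'rV[R]_m, u = x *m M.

(* R-linear maps K -> A, represented as functions on R^n that are linear on K. *)
Definition linear_on_sub (R : comNzRingType) (A : lmodType R) (m n : nat)
    (M : 'M[R]_(m, n)) (f : 'rV[R]_n -> A) : Prop :=
  forall (c : R) (u v : 'rV[R]_n), in_rowspan M u -> in_rowspan M v ->
    f (c *: u + v) = c *: f u + f v.

(* From 0 -> K -> R^n -> N -> 0 with R^n free, Ext^1_R(N, A) = Hom_R(K, A) / Im Hom_R(R^n, A),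
   the class [f] of f : K -> A being 0 iff f extends to R^n; the R-action is r[f] = [r f].
   Ext^1_R(N, A) is GV-torsion iff for every f : K -> A there is a GV-ideal J with
   J [f] = 0, i.e. for every r in J, r f extends to an R-linear map R^n -> A. *)
Definition Ext1_fp_GV_torsion (R : comNzRingType) (A : lmodType R) (m n : nat)
    (M : 'M[R]_(m, n)) : Prop :=
  forall f : 'rV[R]_n -> A, linear_on_sub M f ->
    exists (k : nat) (a : 'I_k -> R), GV_ideal a /\
      forall r : R, in_ideal_gen a r ->
        exists g : {linear 'rV[R]_n -> A},
          forall u, in_rowspan M u -> g u = r *: f u.

Definition absolutely_w_pure (R : comNzRingType) (A : lmodType R) : Prop :=
  forall (m n : nat) (M : 'M[R]_(m, n)), Ext1_fp_GV_torsion A M.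

Definition short_exact (R : comNzRingType) (A B C : lmodType R)
    (i : {linear A -> B}) (p : {linear B -> C}) : Prop :=
  injective i /\ (forall c : C, exists b : B, p b = c) /\
  (forall b : B, p b = 0 <-> exists x : A, b = i x).

(* Main.v *)
Require Import Defs.
From HB Require Import structures.
From mathcomp Require Import all_boot all_order all_algebra.
From Stdlib Require Import Classical ClassicalEpsilon.
From mathcomp Require Import ring.
Set Implicit Arguments. Unset Strict Implicit. Unset Printing Implicit Defensive.
Import GRing.Theory.
Local Open Scope ring_scope.


Lemma ideal0 (R : comNzRingType) m (a : 'I_m -> R) : in_ideal_gen a 0.
Proof. by exists (fun _ => 0); rewrite big1 // => i _; rewrite mul0r. Qed.

Lemma idealP (R : comNzRingType) m (a : 'I_m -> R) c x y :
  in_ideal_gen a x -> in_ideal_gen a y -> in_ideal_gen a (c * x + y).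
Proof.
move=> [u ->] [v ->]; exists (fun i => c * u i + v i).
rewrite mulr_sumr -big_split /=; apply: eq_bigr => i _.
by rewrite mulrDl mulrA.
Qed.

Lemma idealM (R : comNzRingType) m (a : 'I_m -> R) c x :
  in_ideal_gen a x -> in_ideal_gen a (c * x).
Proof. by move=> h; rewrite -[c * x]addr0; apply: idealP => //; apply: ideal0. Qed.

Lemma idealD (R : comNzRingType) m (a : 'I_m -> R) x y :
  in_ideal_gen a x -> in_ideal_gen a y -> in_ideal_gen a (x + y).
Proof. by move=> h1 h2; rewrite -[x]mul1r; apply: idealP. Qed.

Lemma ideal_gen (R : comNzRingType) m (a : 'I_m -> R) i : in_ideal_gen a (a i).
Proof.
exists (fun j => if j == i then 1 else 0).
rewrite (bigD1 i) //= eqxx mul1r big1 ?addr0 // => j /negbTE ->.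
by rewrite mul0r.
Qed.

Lemma ideal_ind (R : comNzRingType) m (a : 'I_m -> R) (P : R -> Prop) :
  P 0 -> (forall c x y, P x -> P y -> P (c * x + y)) -> (forall i, P (a i)) ->
  forall j, in_ideal_gen a j -> P j.
Proof.
move=> P0 PD Pa j [x ->].
apply: (big_ind P) => //.
  by move=> u v Pu Pv; rewrite -[u]mul1r; apply: PD.
by move=> i _; rewrite -[_ * _]addr0; apply: PD.
Qed.

Lemma ideal_sub (R : comNzRingType) m k (a : 'I_m -> R) (b : 'I_k -> R) :
  (forall i, in_ideal_gen b (a i)) -> forall j, in_ideal_gen a j -> in_ideal_gen b j.
Proof.
move=> h; apply: ideal_ind => //; first exact: ideal0.
by move=> c x y; apply: idealP.
Qed.

Lemma gen_enum (R : comNzRingType) (T : finType) (g : T -> R) j :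
  in_ideal_gen (fun i : 'I_#|T| => g (enum_val i)) j <->
  exists x : T -> R, j = \sum_t x t * g t.
Proof.
split.
  move=> [x ->]; exists (fun t => x (enum_rank t)).
  rewrite (big_enum_val (fun t => x (enum_rank t) * g t)) /=.
  by apply: eq_bigr => i _; rewrite enum_valK.
move=> [x ->]; exists (fun i => x (enum_val i)).
by rewrite (big_enum_val (fun t => x t * g t)).
Qed.

Definition prodg (R : comNzRingType) k1 k2 (a : 'I_k1 -> R) (b : 'I_k2 -> R) :
  'I_#|{: 'I_k1 * 'I_k2}| -> R :=
  fun t => a (enum_val t).1 * b (enum_val t).2.

Lemma prodgP (R : comNzRingType) k1 k2 (a : 'I_k1 -> R) (b : 'I_k2 -> R) j :
  in_ideal_gen (prodg a b) j <->
  exists z : 'I_k1 -> 'I_k2 -> R, j = \sum_i \sum_l z i l * (a i * b l).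
Proof.
rewrite /prodg (gen_enum (fun t : 'I_k1 * 'I_k2 => a t.1 * b t.2)).
split.
  move=> [x ->]; exists (fun i l => x (i, l)).
  by rewrite pair_big /=; apply: eq_bigr => -[].
move=> [z ->]; exists (fun t => z t.1 t.2).
by rewrite pair_big.
Qed.

Lemma ideal_sum (R : comNzRingType) m (a : 'I_m -> R) (I : Type) (r : seq I) (F : I -> R) :
  (forall i, in_ideal_gen a (F i)) -> in_ideal_gen a (\sum_(i <- r) F i).
Proof.
move=> h; apply: (big_ind (in_ideal_gen a)); first exact: ideal0.
  by move=> x y; apply: idealD.
by move=> i _; apply: h.
Qed.

Lemma prod_mem (R : comNzRingType) k1 k2 (a : 'I_k1 -> R) (b : 'I_k2 -> R) x y :
  in_ideal_gen a x -> in_ideal_gen b y -> in_ideal_gen (prodg a b) (x * y).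
Proof.
move=> [u ->] [v ->]; apply/prodgP; exists (fun i l => u i * v l).
rewrite mulr_suml; apply: eq_bigr => i _; rewrite mulr_sumr; apply: eq_bigr => l _.
by rewrite mulrACA.
Qed.

Lemma prod_sub1 (R : comNzRingType) k1 k2 (a : 'I_k1 -> R) (b : 'I_k2 -> R) j :
  in_ideal_gen (prodg a b) j -> in_ideal_gen a j.
Proof.
move/prodgP=> [z ->]; apply: ideal_sum => i; apply: ideal_sum => l.
rewrite mulrA mulrAC; apply: idealM; exact: ideal_gen.
Qed.

Lemma prod_sub2 (R : comNzRingType) k1 k2 (a : 'I_k1 -> R) (b : 'I_k2 -> R) j :
  in_ideal_gen (prodg a b) j -> in_ideal_gen b j.
Proof.
move/prodgP=> [z ->]; apply: ideal_sum => i; apply: ideal_sum => l.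
rewrite mulrA; apply: idealM; exact: ideal_gen.
Qed.

Lemma lin_ideal0 (R : comNzRingType) m (a : 'I_m -> R) phi :
  linear_on_ideal a phi -> phi 0 = 0.
Proof.
move=> h; have := h 1 0 0 (ideal0 a) (ideal0 a).
rewrite !mul1r addr0 => e; apply: (@addrI _ (phi 0)); by rewrite addr0 -e.
Qed.

Lemma lin_ideal_sum (R : comNzRingType) m (a : 'I_m -> R) phi (I : Type) (r : seq I) (F : I -> R) :
  linear_on_ideal a phi -> (forall i, in_ideal_gen a (F i)) ->
  phi (\sum_(i <- r) F i) = \sum_(i <- r) phi (F i).
Proof.
move=> h hF.
suff: in_ideal_gen a (\sum_(i <- r) F i) /\ phi (\sum_(i <- r) F i) = \sum_(i <- r) phi (F i) by case.
apply: (big_ind2 (fun x y => in_ideal_gen a x /\ phi x = y)).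
- by split; [exact: ideal0 | exact: lin_ideal0 h].
- move=> x1 y1 x2 y2 [h1 <-] [h2 <-]; split; first exact: idealD.
  by have := h 1 x1 x2 h1 h2; rewrite !mul1r.
- by move=> i _; split; [exact: hF|].
Qed.

Lemma GV_prod (R : comNzRingType) k1 k2 (a : 'I_k1 -> R) (b : 'I_k2 -> R) :
  GV_ideal a -> GV_ideal b -> GV_ideal (prodg a b).
Proof.
move=> [inja sura] [injb surb]; split.
  move=> r hr; apply: injb => y hy; apply: inja => x hx.
  by rewrite -mulrA [y * x]mulrC hr //; apply: prod_mem.
move=> phi hphi.
have ex y : exists r, in_ideal_gen b y ->
    forall x, in_ideal_gen a x -> phi (x * y) = r * x.
  case: (classic (in_ideal_gen b y)) => hy; last by exists 0.
  have [r hr] : exists r, forall x, in_ideal_gen a x -> phi (x * y) = r * x.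
    apply: sura => c x1 x2 h1 h2.
    rewrite mulrDl -mulrA hphi //; by apply: prod_mem.
  by exists r.
pose rho y := proj1_sig (constructive_indefinite_description _ (ex y)).
have rhoP y : in_ideal_gen b y -> forall x, in_ideal_gen a x -> phi (x * y) = rho y * x.
  exact: (proj2_sig (constructive_indefinite_description _ (ex y))).
have [r hr] : exists r, forall y, in_ideal_gen b y -> rho y = r * y.
  apply: surb => c y1 y2 h1 h2.
  apply/eqP; rewrite -subr_eq0; apply/eqP; apply: inja => x hx.
  rewrite mulrBl -rhoP; last exact: hx.
    rewrite mulrDl -mulrA -!rhoP // mulrDr mulrCA hphi ?subrr //; by apply: prod_mem.
  by apply: idealP.
exists r => j hj.
have [z ->] := (proj1 (prodgP a b j)) hj.
rewrite (lin_ideal_sum _ hphi); last first.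
  move=> i; apply: ideal_sum => l; rewrite mulrA; apply: prod_mem; [apply: idealM; exact: ideal_gen | exact: ideal_gen].
rewrite mulr_sumr; apply: eq_bigr => i _.
rewrite (lin_ideal_sum _ hphi); last first.
  move=> l; rewrite mulrA; apply: prod_mem; [apply: idealM; exact: ideal_gen | exact: ideal_gen].
rewrite mulr_sumr; apply: eq_bigr => l _.
rewrite mulrA rhoP ?hr.
- by ring.
- exact: ideal_gen.
- exact: ideal_gen.
- by apply: idealM; exact: ideal_gen.
Qed.

Lemma GV_one (R : comNzRingType) : GV_ideal (fun _ : 'I_1 => (1 : R)).
Proof.
have all1 j : in_ideal_gen (fun _ : 'I_1 => (1 : R)) j.
  by exists (fun _ => j); rewrite big_ord1 mulr1.
split.
  by move=> r hr; rewrite -[r]mulr1; apply: hr.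
move=> phi hphi; exists (phi 1) => j _.
have := hphi j 1 0 (all1 _) (all1 _).
by rewrite mulr1 (lin_ideal0 hphi) !addr0 mulrC.
Qed.

Lemma common_GV (R : comNzRingType) k (Q : 'I_k -> R -> Prop) :
  (forall j, exists k2 (b : 'I_k2 -> R), GV_ideal b /\ forall s, in_ideal_gen b s -> Q j s) ->
  exists k' (g : 'I_k' -> R), GV_ideal g /\ forall j s, in_ideal_gen g s -> Q j s.
Proof.
elim: k Q => [|k IH] Q hQ.
  by exists 1, (fun _ => 1); split; [exact: GV_one | move=> [] ].
have [k' [g [gg hg]]] := IH (fun j => Q (widen_ord (leqnSn k) j)) (fun j => hQ _).
have [k2 [b [gb hb]]] := hQ ord_max.
exists _, (prodg g b); split; first exact: GV_prod.
move=> j s hs; case: (unliftP ord_max j) => [j' ->|->].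
  have -> : lift ord_max j' = widen_ord (leqnSn k) j' by apply: val_inj => /=; rewrite /bump leqNgt ltn_ord.
  by apply: hg; apply: prod_sub1 hs.
by apply: hb; apply: prod_sub2 hs.
Qed.

Definition ExtOK (R : comNzRingType) (B : lmodType R) m n (M : 'M[R]_(m, n))
  (f : 'rV[R]_n -> B) (r : R) : Prop :=
  exists v : 'I_n -> B, forall u, in_rowspan M u -> \sum_j u 0 j *: v j = r *: f u.

Lemma linvec_is_linear (R : comNzRingType) (B : lmodType R) n (v : 'I_n -> B) :
  linear (fun u : 'rV[R]_n => \sum_j u 0 j *: v j).
Proof.
move=> c u w; rewrite /= scaler_sumr -big_split; apply: eq_bigr => j _.
by rewrite !mxE scalerDl scalerA.
Qed.

Definition linvec (R : comNzRingType) (B : lmodType R) n (v : 'I_n -> B) : {linear 'rV[R]_n -> B} :=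
  HB.pack (fun u : 'rV[R]_n => \sum_j u 0 j *: v j)
    (GRing.isLinear.Build _ _ _ _ _ (linvec_is_linear v)).

Lemma linvecE (R : comNzRingType) (B : lmodType R) n (v : 'I_n -> B) u :
  linvec v u = \sum_j u 0 j *: v j.
Proof. by []. Qed.

Lemma lin_expand (R : comNzRingType) (B : lmodType R) n (g : {linear 'rV[R]_n -> B}) u :
  g u = \sum_j u 0 j *: g (delta_mx 0 j).
Proof.
rewrite {1}(row_sum_delta u) linear_sum; apply: eq_bigr => j _.
by rewrite linearZ.
Qed.

Lemma ExtOK_lin (R : comNzRingType) (B : lmodType R) m n (M : 'M[R]_(m, n)) (f : 'rV[R]_n -> B) r :
  ExtOK M f r -> exists g : {linear 'rV[R]_n -> B},
          forall u, in_rowspan M u -> g u = r *: f u.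
Proof. by move=> [v hv]; exists (linvec v) => u hu; rewrite linvecE hv. Qed.

Lemma lin_ExtOK (R : comNzRingType) (B : lmodType R) m n (M : 'M[R]_(m, n)) (f : 'rV[R]_n -> B) r
  (g : {linear 'rV[R]_n -> B}) :
  (forall u, in_rowspan M u -> g u = r *: f u) -> ExtOK M f r.
Proof. by move=> hg; exists (fun j => g (delta_mx 0 j)) => u hu; rewrite -lin_expand hg. Qed.

Lemma ExtOK_closed (R : comNzRingType) (B : lmodType R) m n (M : 'M[R]_(m, n)) (f : 'rV[R]_n -> B) c r1 r2 :
  ExtOK M f r1 -> ExtOK M f r2 -> ExtOK M f (c * r1 + r2).
Proof.
move=> [v1 h1] [v2 h2]; exists (fun j => c *: v1 j + v2 j) => u hu.
rewrite scalerDl -scalerA -h1 // -h2 // scaler_sumr -big_split; apply: eq_bigr => j _.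
by rewrite scalerDr !scalerA mulrC.
Qed.

Lemma ExtOK0 (R : comNzRingType) (B : lmodType R) m n (M : 'M[R]_(m, n)) (f : 'rV[R]_n -> B) : ExtOK M f 0.
Proof.
exists (fun _ => 0) => u _; rewrite scale0r big1 // => j _; exact: scaler0.
Qed.

Lemma combine (R : comNzRingType) (B : lmodType R) m n (M : 'M[R]_(m, n)) (f : 'rV[R]_n -> B) k (a : 'I_k -> R) :
  GV_ideal a ->
  (forall j, exists k2 (b : 'I_k2 -> R), GV_ideal b /\ forall s, in_ideal_gen b s -> ExtOK M f (a j * s)) ->
  exists (k : nat) (a : 'I_k -> R), GV_ideal a /\
      forall r : R, in_ideal_gen a r ->
        exists g : {linear 'rV[R]_n -> B},
          forall u, in_rowspan M u -> g u = r *: f u.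
Proof.
move=> ga hQ.
have [k' [g [gg hg]]] := common_GV hQ.
exists _, (prodg a g); split; first exact: GV_prod.
move=> r hr; apply: ExtOK_lin; move: r hr; apply: ideal_ind.
- exact: ExtOK0.
- by move=> c x y; apply: ExtOK_closed.
- by move=> t; rewrite /prodg; apply: hg; apply: ideal_gen.
Qed.

Lemma rs0 (R : comNzRingType) m n (M : 'M[R]_(m, n)) : in_rowspan M 0.
Proof. by exists 0; rewrite mul0mx. Qed.

Lemma rsP (R : comNzRingType) m n (M : 'M[R]_(m, n)) c u v :
  in_rowspan M u -> in_rowspan M v -> in_rowspan M (c *: u + v).
Proof. by move=> [x ->] [y ->]; exists (c *: x + y); rewrite mulmxDl scalemxAl. Qed.

Lemma rs_row (R : comNzRingType) m n (M : 'M[R]_(m, n)) i : in_rowspan M (row i M).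
Proof. by exists (delta_mx 0 i); rewrite rowE. Qed.

Lemma lsub0 (R : comNzRingType) (B : lmodType R) m n (M : 'M[R]_(m, n)) (f : 'rV_n -> B) :
  linear_on_sub M f -> f 0 = 0.
Proof.
move=> h; have := h 1 0 0 (rs0 M) (rs0 M).
rewrite !scale1r addr0 => e; apply: (@addrI _ (f 0)); by rewrite addr0 -e.
Qed.

Lemma lsubD (R : comNzRingType) (B : lmodType R) m n (M : 'M[R]_(m, n)) (f : 'rV_n -> B) u v :
  linear_on_sub M f -> in_rowspan M u -> in_rowspan M v -> f (u + v) = f u + f v.
Proof. by move=> h hu hv; have := h 1 u v hu hv; rewrite !scale1r. Qed.

Lemma lsubZ (R : comNzRingType) (B : lmodType R) m n (M : 'M[R]_(m, n)) (f : 'rV_n -> B) c u :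
  linear_on_sub M f -> in_rowspan M u -> f (c *: u) = c *: f u.
Proof.
move=> h hu; have := h c u 0 hu (rs0 M); rewrite !addr0 => ->.
by rewrite (lsub0 h) addr0.
Qed.

Lemma lsub_sum (R : comNzRingType) (B : lmodType R) m n (M : 'M[R]_(m, n)) (f : 'rV_n -> B)
  (I : Type) (r : seq I) (c : I -> R) (w : I -> 'rV_n) :
  linear_on_sub M f -> (forall i, in_rowspan M (w i)) ->
  f (\sum_(i <- r) c i *: w i) = \sum_(i <- r) c i *: f (w i).
Proof.
move=> h hw.
suff: in_rowspan M (\sum_(i <- r) c i *: w i) /\ f (\sum_(i <- r) c i *: w i) = \sum_(i <- r) c i *: f (w i) by case.
apply: (big_ind2 (fun x y => in_rowspan M x /\ f x = y)).
- by split; [exact: rs0 | exact: lsub0 h].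
- move=> x1 y1 x2 y2 [h1 <-] [h2 <-]; split; last exact: (lsubD h h1 h2).
  by rewrite -[x1]scale1r; apply: rsP.
- move=> i _; split; last exact: (lsubZ _ h (hw i)).
  by rewrite -[_ *: _]addr0; apply: rsP => //; exact: rs0.
Qed.

Definition cid' {A : Type} {P : A -> Prop} (h : exists x, P x) : A :=
  proj1_sig (constructive_indefinite_description _ h).
Lemma cid'P {A : Type} {P : A -> Prop} (h : exists x, P x) : P (cid' h).
Proof. exact: (proj2_sig (constructive_indefinite_description _ h)). Qed.

Lemma dirCB (R : comNzRingType) (A B C : lmodType R)
    (i : {linear A -> B}) (p : {linear B -> C}) :
  short_exact i p -> absolutely_w_pure A -> absolutely_w_pure C -> absolutely_w_pure B.
Proof.
move=> [inji [surp exi]] wA wC m n M f hf.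
have hpf : linear_on_sub M (fun u => p (f u)).
  by move=> c u v hu hv /=; rewrite hf // linearP.
have [k [a [ga ha]]] := wC m n M _ hpf.
apply: (combine ga) => j.
have [g hg] := ha (a j) (ideal_gen a j).
pose h l := cid' (surp (g (delta_mx 0 l))).
have hP l : p (h l) = g (delta_mx 0 l) := cid'P (surp (g (delta_mx 0 l))).
pose H := linvec h.
have pH u : p (H u) = g u.
  by rewrite linvecE linear_sum lin_expand; apply: eq_bigr => l _; rewrite linearZ hP.
have ex u : exists x, in_rowspan M u -> i x = a j *: f u - H u.
  case: (classic (in_rowspan M u)) => hu; last by exists 0.
  have [x hx] : exists x, a j *: f u - H u = i x.
    by apply/exi; rewrite linearB linearZ pH hg // subrr.
  by exists x.
pose phi u := cid' (ex u).
have phiP u : in_rowspan M u -> i (phi u) = a j *: f u - H u := cid'P (ex u).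
have hphi : linear_on_sub M phi.
  move=> c u v hu hv; apply: inji.
  rewrite linearP !phiP ?hf //; last exact: rsP.
  rewrite linearP scalerDr scalerA mulrC -scalerA.
  by rewrite linearP scalerN opprD addrACA.
have [k2 [b [gb hb]]] := wA m n M phi hphi.
exists k2, b; split => // s hs.
have [g2 hg2] := hb s hs.
exists (fun l => s *: h l + i (g2 (delta_mx 0 l))) => u hu.
have -> : \sum_j0 u 0 j0 *: (s *: h j0 + i (g2 (delta_mx 0 j0)))
          = s *: H u + i (g2 u).
  rewrite linvecE scaler_sumr (lin_expand g2 u) linear_sum -big_split.
  apply: eq_bigr => l _; by rewrite scalerDr !scalerA mulrC linearZ.
by rewrite hg2 // linearZ_LR phiP // scalerBr addrC subrK scalerA mulrC.
Qed.

Lemma syz_col (R : comNzRingType) : coherent R ->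
  forall m (c : 'cV[R]_m), exists k (T : 'M[R]_(k, m)),
    forall x : 'rV_m, x *m c = 0 <-> in_rowspan T x.
Proof.
move=> coh m c.
pose a i := c i 0.
have [m' [a' [hsame [k [s hs]]]]] := coh m a.
pose Cf i := cid' (proj1 (hsame (a i)) (ideal_gen a i)).
have CfP i : a i = \sum_j Cf i j * a' j := cid'P (proj1 (hsame (a i)) (ideal_gen a i)).
pose Df j := cid' (proj2 (hsame (a' j)) (ideal_gen a' j)).
have DfP j : a' j = \sum_l Df j l * a l := cid'P (proj2 (hsame (a' j)) (ideal_gen a' j)).
pose al : 'cV[R]_m' := \col_j a' j.
pose Cm : 'M[R]_(m, m') := \matrix_(i, j) Cf i j.
pose Dm : 'M[R]_(m', m) := \matrix_(j, l) Df j l.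
pose S' : 'M[R]_(k, m') := \matrix_(l, j) s l j.
have eC : c = Cm *m al.
  apply/matrixP => i z; rewrite ord1 mxE -/(a i) CfP; apply: eq_bigr => j _; by rewrite !mxE.
have eD : al = Dm *m c.
  apply/matrixP => j z; rewrite ord1 !mxE DfP; apply: eq_bigr => l _; by rewrite !mxE.
have syzS (y : 'rV_m') : y *m al = 0 <-> exists z : 'rV_k, y = z *m S'.
  have e1 : y *m al = 0 <-> syzygy a' (fun j => y 0 j).
    rewrite /syzygy; split.
      move/matrixP => /(_ 0 0); rewrite !mxE => h; apply: etrans h.
      by apply: eq_bigr => j _; rewrite mxE.
    move=> h; apply/matrixP => u v; rewrite !ord1 !mxE -[RHS]h.
    by apply: eq_bigr => j _; rewrite mxE.
  rewrite e1 hs; split.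
    move=> [z hz]; exists (\row_l z l); apply/matrixP => u j; rewrite ord1 hz !mxE.
    by apply: eq_bigr => l _; rewrite !mxE.
  move=> [z ->]; exists (fun l => z 0 l) => j; rewrite !mxE.
  by apply: eq_bigr => l _; rewrite !mxE.
exists (m + k)%N, (col_mx (1%:M - Cm *m Dm) (S' *m Dm)) => x; split.
  move=> hx.
  have : (x *m Cm) *m al = 0 by rewrite -mulmxA -eC.
  move/syzS => [z hz].
  exists (row_mx x z); rewrite mul_row_col mulmxBr mulmx1 mulmxA -hz mulmxA.
  by rewrite subrK.
move=> [w ->]; rewrite -[w]hsubmxK mul_row_col mulmxDl -!mulmxA.
rewrite mulmxBl mul1mx -mulmxA -eD -eC subrr mulmx0 add0r.
rewrite mulmxA; apply/syzS; by exists (rsubmx w).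
Qed.

Lemma coh_syz (R : comNzRingType) : coherent R ->
  forall n m (M : 'M[R]_(m, n)), exists k (S : 'M[R]_(k, m)),
    forall x : 'rV_m, x *m M = 0 <-> in_rowspan S x.
Proof.
move=> coh; elim=> [|n IH] m M.
  exists m, 1%:M => x; split => _; last by apply/matrixP => i [].
  by exists x; rewrite mulmx1.
pose M' : 'M[R]_(m, 1 + n) := M.
pose c := lsubmx M'; pose M2 := rsubmx M'.
have eM (x : 'rV[R]_m) : x *m M = 0 <-> x *m c = 0 /\ x *m M2 = 0.
  have -> : x *m M = x *m M' by [].
  rewrite -[M']hsubmxK mul_mx_row; split.
    move=> h; have h' : row_mx (x *m c) (x *m M2) = row_mx (0 : 'M[R]_(1, 1)) (0 : 'M[R]_(1, n)).
      by rewrite row_mx0; exact: h.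
    by case: (eq_row_mx h').
  by move=> [-> ->]; rewrite row_mx0.
have [k1 [T hT]] := syz_col coh c.
have [k2 [S2 hS2]] := IH k1 (T *m M2).
exists k2, (S2 *m T) => x; rewrite eM; split.
  move=> [/hT [y ey] h2].
  have : y *m (T *m M2) = 0 by rewrite mulmxA -ey.
  move=> /(proj1 (hS2 y)) [z ez]; exists z; by rewrite mulmxA -ez.
move=> [z ->]; split.
  by apply/hT; exists (z *m S2); rewrite mulmxA.
have -> : z *m (S2 *m T) *m M2 = (z *m S2) *m (T *m M2) by rewrite !mulmxA.
apply: (proj2 (hS2 _)); by exists z.
Qed.

Lemma dirBC (R : comNzRingType) (A B C : lmodType R)
    (i : {linear A -> B}) (p : {linear B -> C}) :
  coherent R -> short_exact i p -> absolutely_w_pure A -> absolutely_w_pure B -> absolutely_w_pure C.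
Proof.
move=> coh [inji [surp exi]] wA wB m n M f hf.
have [k [S hS]] := coh_syz coh M.
pose cc l := cid' (surp (f (row l M))).
have ccP l : p (cc l) = f (row l M) := cid'P (surp (f (row l M))).
pose H := linvec cc.
have pH x : p (H x) = f (x *m M).
  rewrite linvecE linear_sum mulmx_sum_row (lsub_sum _ _ hf); last by move=> l; exact: rs_row.
  by apply: eq_bigr => l _; rewrite linearZ_LR ccP.
have pi x : p (i x) = 0 := proj2 (exi (i x)) (ex_intro _ x erefl).
have ex x : exists y, in_rowspan S x -> i y = H x.
  case: (classic (in_rowspan S x)) => hx; last by exists 0.
  have [y hy] : exists y, H x = i y by apply/exi; rewrite pH (proj2 (hS x) hx) (lsub0 hf).
  by exists y.
pose phi x := cid' (ex x).
have phiP x : in_rowspan S x -> i (phi x) = H x := cid'P (ex x).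
have hphi : linear_on_sub S phi.
  move=> c u v hu hv; apply: inji; rewrite linearP !phiP ?linearP //; exact: rsP.
have [k1 [a [ga ha]]] := wA k m S phi hphi.
apply: (combine ga) => j.
have [g1 hg1] := ha (a j) (ideal_gen a j).
pose H' x := a j *: H x - i (g1 x).
have H'lin c x y : H' (c *: x + y) = c *: H' x + H' y.
  rewrite /H' (linearP H) (linearP g1) (linearP i) scalerDr (scalerA (a j) c) [a j * c]mulrC.
  by rewrite -scalerA scalerBr opprD addrACA.
have H'0 x : in_rowspan S x -> H' x = 0.
  by move=> hx; rewrite /H' hg1 // linearZ_LR phiP // subrr.
have ex2 u : exists x : 'rV_m, in_rowspan M u -> u = x *m M.
  case: (classic (in_rowspan M u)) => hu; last by exists 0.
  by case: hu => x ->; exists x.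
pose xo u := cid' (ex2 u).
have xoP u : in_rowspan M u -> u = xo u *m M := cid'P (ex2 u).
pose psi u := H' (xo u).
have psiE u x : in_rowspan M u -> u = x *m M -> psi u = H' x.
  move=> hu ex'; have : (xo u - x) *m M = 0 by rewrite mulmxBl -xoP // -ex' subrr.
  move/(proj1 (hS _)) => /H'0 h0.
  have := H'lin (-1) x (xo u); rewrite !scaleN1r addrC h0 => /eqP.
  by rewrite eq_sym addrC subr_eq0 => /eqP.
have hpsi : linear_on_sub M psi.
  move=> c u v hu hv.
  rewrite (psiE (c *: u + v) (c *: xo u + xo v)); first exact: H'lin.
    exact: rsP.
  by rewrite mulmxDl -scalemxAl -!xoP.
have ppsi u : in_rowspan M u -> p (psi u) = a j *: f u.
  by move=> hu; rewrite /psi /H' linearB linearZ_LR pi subr0 pH -xoP.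
have [k2 [b [gb hb]]] := wB m n M psi hpsi.
exists k2, b; split => // s hs.
have [g2 hg2] := hb s hs.
exists (fun l => p (g2 (delta_mx 0 l))) => u hu.
have -> : \sum_l u 0 l *: p (g2 (delta_mx 0 l)) = p (g2 u).
  by rewrite (lin_expand g2 u) linear_sum; apply: eq_bigr => l _; rewrite linearZ_LR.
by rewrite hg2 // linearZ_LR ppsi // scalerA mulrC.
Qed.

Theorem lemma2p12 (R : comNzRingType) (A B C : lmodType R)
    (i : {linear A -> B}) (p : {linear B -> C}) :
  coherent R -> short_exact i p -> absolutely_w_pure A ->
  (absolutely_w_pure B <-> absolutely_w_pure C).
Proof.
move=> coh se wA; split; [exact: (dirBC coh se wA) | exact: (dirCB se wA)].
Qed.
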